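(* If $\mathrm{char}(\Bbbk)=0$ or $\mathrm{char}(\Bbbk)=p\ge5$, then $P$ is minimally generated by $f_1=3y^3-4xyz+x^4-3y^3z^5-2xy^6z^2-x^2y^4z^3$, $f_2=2y^2z-3xz^2+x^3y-2y^7z^2-xy^5z^3$, $f_3=yz^2-3x^2y^2+2x^3z-y^6z^3-2xy^4z^4$, $f_4=z^3-2xy^3+x^2yz-y^5z^4$; in particular $\mu(P)=4$.
   Context: $\Bbbk$ is a field. $\rho:\Bbbk[[x,y,z]]\to\Bbbk[[t]]$ is the $\Bbbk$-algebra morphism with $\rho(x)=t^6+t^{31}$, $\rho(y)=t^8$, $\rho(z)=t^{10}$, and $P=\ker\rho$ (the first prime of Moh, $n=3$, $\lambda=25$). $\mu(P)$ is the minimal number of generators of $P$. *)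

(* Defs.v *)
From HB Require Import structures.
From mathcomp Require Import all_boot all_order all_algebra.
Set Implicit Arguments. Unset Strict Implicit. Unset Printing Implicit Defensive.
Import Order.TTheory GRing.Theory Num.Theory.
Local Open Scope ring_scope.

(* Formal power series in three variables x,y,z over K, given by their
   coefficient function: F a b c = coefficient of x^a y^b z^c. *)
Definition ps3 (K : fieldType) := nat -> nat -> nat -> K.

Section PS3.
Variable K : fieldType.

Definition ps3_add (F G : ps3 K) : ps3 K := fun a b c => F a b c + G a b c.
Definition ps3_zero : ps3 K := fun _ _ _ => 0.

Definition ps3_mul (F G : ps3 K) : ps3 K := fun a b c =>
  \sum_(i < a.+1) \sum_(j < b.+1) \sum_(l < c.+1)
     F i j l * G (a - i)%N (b - j)%N (c - l)%N.

Definition ps3_mono (r : K) (a b c : nat) : ps3 K := fun i j l =>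
  if [&& i == a, j == b & l == c] then r else 0.

Definition ps3_ideal (n : nat) (g : 'I_n -> ps3 K) : ps3 K -> Prop :=
  fun F => exists h : 'I_n -> ps3 K,
    F = fun a b c => \sum_(i < n) ps3_mul (h i) (g i) a b c.

(* rho : K[[x,y,z]] -> K[[t]],  x |-> t^6 + t^31, y |-> t^8, z |-> t^10.
   rho F n is the coefficient of t^n in rho(F); only monomials
   x^a y^b z^c with a,b,c <= n can contribute to it. *)
Definition rho (F : ps3 K) (n : nat) : K :=
  \sum_(a < n.+1) \sum_(b < n.+1) \sum_(c < n.+1)
     F a b c * (('X^6 + 'X^31) ^+ a * 'X^(8 * b + 10 * c) : {poly K})`_n.

Definition P_Moh : ps3 K -> Prop := fun F => forall n, rho F n = 0.

Definition sum_ps3 (s : seq (ps3 K)) : ps3 K := foldr ps3_add ps3_zero s.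

Definition f1 : ps3 K := sum_ps3
  [:: ps3_mono 3 0 3 0; ps3_mono (-4) 1 1 1; ps3_mono 1 4 0 0;
      ps3_mono (-3) 0 3 5; ps3_mono (-2) 1 6 2; ps3_mono (-1) 2 4 3].
Definition f2 : ps3 K := sum_ps3
  [:: ps3_mono 2 0 2 1; ps3_mono (-3) 1 0 2; ps3_mono 1 3 1 0;
      ps3_mono (-2) 0 7 2; ps3_mono (-1) 1 5 3].
Definition f3 : ps3 K := sum_ps3
  [:: ps3_mono 1 0 1 2; ps3_mono (-3) 2 2 0; ps3_mono 2 3 0 1;
      ps3_mono (-1) 0 6 3; ps3_mono (-2) 1 4 4].
Definition f4 : ps3 K := sum_ps3
  [:: ps3_mono 1 0 0 3; ps3_mono (-2) 1 3 0; ps3_mono 1 2 1 1;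
      ps3_mono (-1) 0 5 4].

Definition fgens (i : 'I_4) : ps3 K :=
  match val i with 0 => f1 | 1 => f2 | 2 => f3 | _ => f4 end.

End PS3.

(* Main.v *)
Require Import Defs.
From HB Require Import structures.
From mathcomp Require Import all_boot all_order all_algebra.
From mathcomp Require Import boolp.
From mathcomp Require Import ring zify.
Set Implicit Arguments. Unset Strict Implicit. Unset Printing Implicit Defensive.
Import Order.TTheory GRing.Theory Num.Theory.
Local Open Scope ring_scope.

Section R.
Variable K : fieldType.
Local Notation ps := (ps3 K).

HB.instance Definition _ := gen_eqMixin ps.
HB.instance Definition _ := gen_choiceMixin ps.

Lemma ps_ext (F G : ps) : (forall a b c, F a b c = G a b c) -> F = G.
Proof.
move=> H; apply: functional_extensionality_dep => a.
apply: functional_extensionality_dep => b; apply: functional_extensionality_dep => c.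
exact: H.
Qed.

Definition ps3_opp (F : ps) : ps := fun a b c => - F a b c.
Definition ps3_one : ps := ps3_mono 1 0 0 0.

Lemma ps3_addA : associative (@ps3_add K).
Proof. by move=> F G H; apply: ps_ext => a b c; rewrite /ps3_add addrA. Qed.
Lemma ps3_addC : commutative (@ps3_add K).
Proof. by move=> F G; apply: ps_ext => a b c; rewrite /ps3_add addrC. Qed.
Lemma ps3_add0 : left_id (@ps3_zero K) (@ps3_add K).
Proof. by move=> F; apply: ps_ext => a b c; rewrite /ps3_add /ps3_zero add0r. Qed.
Lemma ps3_addN : left_inverse (@ps3_zero K) ps3_opp (@ps3_add K).
Proof. by move=> F; apply: ps_ext => a b c; rewrite /ps3_add /ps3_opp /ps3_zero addNr. Qed.

HB.instance Definition _ := GRing.isZmodule.Build ps ps3_addA ps3_addC ps3_add0 ps3_addN.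

Lemma sum_ord_if (n a : nat) (x : nat -> K) :
  \sum_(i < n) (if (i : nat) == a then x (i : nat) else 0) = if (a < n)%N then x a else 0.
Proof.
elim: n => [|n IH]; first by rewrite big_ord0.
rewrite big_ord_recr /= IH.
case: eqP => [->|/eqP Hn]; first by rewrite ltnn ltnSn add0r.
rewrite addr0 [in RHS]ltnS [in RHS]leq_eqVlt; case: eqP => // E; case/eqP: Hn; by rewrite E.
Qed.

Lemma monoM_coef r a0 b0 c0 (F : ps) a b c :
  ps3_mul (ps3_mono r a0 b0 c0) F a b c =
  if [&& a0 <= a, b0 <= b & c0 <= c]%N then r * F (a-a0)%N (b-b0)%N (c-c0)%N else 0.
Proof.
rewrite /ps3_mul /ps3_mono.
transitivity (\sum_(i < a.+1) if (i:nat) == a0 then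
   (\sum_(j < b.+1) if (j:nat) == b0 then
     (\sum_(l < c.+1) if (l:nat) == c0 then r * F (a - i)%N (b - j)%N (c - l)%N else 0)
    else 0) else 0).
  apply: eq_bigr => i _; case: eqP => _ /=.
    apply: eq_bigr => j _; case: eqP => _ /=.
      by apply: eq_bigr => l _; case: eqP => _ /=; rewrite ?mul0r.
    by rewrite big1 // => l _; rewrite mul0r.
  by rewrite big1 // => j _; rewrite big1 // => l _; rewrite mul0r.
rewrite (sum_ord_if _ _ (fun i => \sum_(j < b.+1) if (j:nat) == b0 then
     (\sum_(l < c.+1) if (l:nat) == c0 then r * F (a - i)%N (b - j)%N (c - l)%N else 0)
    else 0)).
rewrite ltnS; case: (a0 <= a)%N => //=.
rewrite (sum_ord_if _ _ (fun j => (\sum_(l < c.+1) if (l:nat) == c0 then r * F (a - a0)%N (b - j)%N (c - l)%N else 0))).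
rewrite ltnS; case: (b0 <= b)%N => //=.
rewrite (sum_ord_if _ _ (fun l => r * F (a - a0)%N (b - b0)%N (c - l)%N)).
by rewrite ltnS.
Qed.


Local Notation Q := {poly {poly {poly K}}}.

Lemma coefM3 (p q : Q) a b c :
  (p * q)`_a`_b`_c = \sum_(i < a.+1) \sum_(j < b.+1) \sum_(l < c.+1)
     p`_i`_j`_l * q`_(a - i)`_(b - j)`_(c - l).
Proof.
rewrite coefM coef_sum coef_sum; apply: eq_bigr => i _.
rewrite coefM coef_sum; apply: eq_bigr => j _.
by rewrite coefM.
Qed.

Definition cf (p : Q) : ps := fun a b c => p`_a`_b`_c.

Lemma cf_mul (p q : Q) : ps3_mul (cf p) (cf q) = cf (p * q).
Proof. by apply: ps_ext => a b c; rewrite /cf coefM3. Qed.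

Definition box (F G : ps) a b c :=
  forall i j l, (i <= a)%N -> (j <= b)%N -> (l <= c)%N -> F i j l = G i j l.

Lemma mul_loc (F F' G G' : ps) a b c : box F F' a b c -> box G G' a b c ->
  ps3_mul F G a b c = ps3_mul F' G' a b c.
Proof.
move=> HF HG; apply: eq_bigr => i _; apply: eq_bigr => j _; apply: eq_bigr => l _.
have hi := ltn_ord i; have hj := ltn_ord j; have hl := ltn_ord l.
by rewrite HF ?HG // ?leq_subr // -ltnS.
Qed.

Definition TN N (F : ps) : Q := \poly_(a < N) \poly_(b < N) \poly_(c < N) F a b c.

Lemma cfT N F a b c : (a < N)%N -> (b < N)%N -> (c < N)%N -> cf (TN N F) a b c = F a b c.
Proof. by move=> ha hb hc; rewrite /cf /TN coef_poly ha coef_poly hb coef_poly hc. Qed.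

Lemma mul_cfT (F G : ps) a b c :
  ps3_mul F G a b c = cf (TN (a+b+c).+1 F * TN (a+b+c).+1 G) a b c.
Proof.
rewrite -cf_mul; apply: mul_loc => i j l hi hj hl; rewrite cfT //;
 rewrite ltnS; lia.
Qed.


Lemma box_T N F a b c : (a < N)%N -> (b < N)%N -> (c < N)%N -> box F (cf (TN N F)) a b c.
Proof. move=> ha hb hc i j l hi hj hl; rewrite cfT //; lia. Qed.

Lemma box_mul N F G a b c : (a < N)%N -> (b < N)%N -> (c < N)%N ->
  box (ps3_mul F G) (cf (TN N F * TN N G)) a b c.
Proof.
move=> ha hb hc i j l hi hj hl; rewrite -cf_mul; apply: mul_loc; apply: box_T; lia.
Qed.

Lemma ps3_mulA : associative (@ps3_mul K).
Proof.
move=> F G H; apply: ps_ext => a b c.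
set N := (a + b + c).+1.
have ha : (a < N)%N by rewrite /N; lia.
have hb : (b < N)%N by rewrite /N; lia.
have hc : (c < N)%N by rewrite /N; lia.
rewrite (@mul_loc _ (cf (TN N F)) _ (cf (TN N G * TN N H)) a b c); last first.
- exact: box_mul.
- exact: box_T.
rewrite [RHS](@mul_loc _ (cf (TN N F * TN N G)) _ (cf (TN N H)) a b c); last first.
- exact: box_T.
- exact: box_mul.
by rewrite !cf_mul mulrA.
Qed.

Lemma ps3_mulC : commutative (@ps3_mul K).
Proof.
move=> F G; apply: ps_ext => a b c.
set N := (a + b + c).+1.
have ha : (a < N)%N by rewrite /N; lia.
have hb : (b < N)%N by rewrite /N; lia.
have hc : (c < N)%N by rewrite /N; lia.
rewrite (@mul_loc _ (cf (TN N F)) _ (cf (TN N G)) a b c); try exact: box_T.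
rewrite [RHS](@mul_loc _ (cf (TN N G)) _ (cf (TN N F)) a b c); try exact: box_T.
by rewrite !cf_mul mulrC.
Qed.

Lemma ps3_mul1 : left_id ps3_one (@ps3_mul K).
Proof.
move=> F; apply: ps_ext => a b c; rewrite /ps3_one monoM_coef /= !subn0 mul1r.
done.
Qed.

Lemma ps3_mulDl : left_distributive (@ps3_mul K) (@ps3_add K).
Proof.
move=> F G H; apply: ps_ext => a b c; rewrite /ps3_mul /ps3_add -!big_split /=.
apply: eq_bigr => i _; rewrite -big_split; apply: eq_bigr => j _; rewrite -big_split.
by apply: eq_bigr => l _; rewrite mulrDl.
Qed.

Lemma ps3_one_neq0 : ps3_one != 0.
Proof.
apply/eqP => H; have := congr1 (fun F : ps => F 0%N 0%N 0%N) H.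
by rewrite /ps3_one /ps3_mono /= => /eqP; rewrite oner_eq0.
Qed.

HB.instance Definition _ := GRing.Zmodule_isComNzRing.Build ps
  ps3_mulA ps3_mulC ps3_mul1 ps3_mulDl ps3_one_neq0.


Lemma addE (F G : ps) a b c : (F + G) a b c = F a b c + G a b c. Proof. by []. Qed.
Lemma oppE (F : ps) a b c : (- F) a b c = - F a b c. Proof. by []. Qed.
Lemma subE (F G : ps) a b c : (F - G) a b c = F a b c - G a b c. Proof. by []. Qed.
Lemma zeroE a b c : (0 : ps) a b c = 0. Proof. by []. Qed.
Lemma mulE (F G : ps) a b c : (F * G) a b c = ps3_mul F G a b c. Proof. by []. Qed.
Lemma sumE I (r : seq I) (P : pred I) (F : I -> ps) a b c :
  (\sum_(i <- r | P i) F i) a b c = \sum_(i <- r | P i) F i a b c.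
Proof.
elim: r => [|i r IH]; first by rewrite !big_nil.
rewrite !big_cons; case: (P i) => //; by rewrite addE IH.
Qed.

Definition mono := @ps3_mono K.
Definition C r := mono r 0 0 0.
Definition X := mono 1 1 0 0.
Definition Y := mono 1 0 1 0.
Definition Z := mono 1 0 0 1.

Lemma monoE r a0 b0 c0 a b c : mono r a0 b0 c0 a b c =
  if [&& a == a0, b == b0 & c == c0] then r else 0.
Proof. by []. Qed.

Lemma monoM r s a b c a' b' c' :
  mono r a b c * mono s a' b' c' = mono (r * s) (a + a') (b + b') (c + c').
Proof.
apply: ps_ext => A B D; rewrite mulE monoM_coef !monoE.
case: (leqP a A) => ha /=; last first.
  by case: eqP => // E; move: ha; rewrite E; lia.
case: (leqP b B) => hb /=; last first.
  by case: eqP => //; case: eqP => // E; move: hb; rewrite E; lia.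
case: (leqP c D) => hc /=; last first.
  by case: eqP => //; case: eqP => //; case: eqP => // E; move: hc; rewrite E; lia.
have e1 : (A - a == a')%N = (A == a + a')%N by apply/eqP/eqP; lia.
have e2 : (B - b == b')%N = (B == b + b')%N by apply/eqP/eqP; lia.
have e3 : (D - c == c')%N = (D == c + c')%N by apply/eqP/eqP; lia.
rewrite e1 e2 e3; case: (_ && _) => //=; by rewrite ?mulr0.
Qed.

Lemma monoD r s a b c : mono (r + s) a b c = mono r a b c + mono s a b c.
Proof. apply: ps_ext => A B D; rewrite addE !monoE; case: (_ && _) => //; by rewrite addr0. Qed.
Lemma monoN r a b c : mono (- r) a b c = - mono r a b c.
Proof. apply: ps_ext => A B D; rewrite oppE !monoE; case: (_ && _) => //; by rewrite oppr0. Qed.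
Lemma mono0 a b c : mono 0 a b c = 0.
Proof. by apply: ps_ext => A B D; rewrite !monoE; case: (_ && _). Qed.
Lemma C1 : C 1 = 1. Proof. by []. Qed.
Lemma CM r s : C (r * s) = C r * C s. Proof. by rewrite /C monoM. Qed.
Lemma CD r s : C (r + s) = C r + C s. Proof. exact: monoD. Qed.
Lemma CN r : C (- r) = - C r. Proof. exact: monoN. Qed.

Lemma mono_expX a : X ^+ a = mono 1 a 0 0.
Proof. elim: a => [|a IH]; first by []. by rewrite exprS IH /X monoM mul1r. Qed.
Lemma mono_expY a : Y ^+ a = mono 1 0 a 0.
Proof. elim: a => [|a IH]; first by []. by rewrite exprS IH /Y monoM mul1r. Qed.
Lemma mono_expZ a : Z ^+ a = mono 1 0 0 a.
Proof. elim: a => [|a IH]; first by []. by rewrite exprS IH /Z monoM mul1r. Qed.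

Lemma monoCXYZ r a b c : mono r a b c = C r * X ^+ a * Y ^+ b * Z ^+ c.
Proof. by rewrite mono_expX mono_expY mono_expZ /C !monoM !mulr1 !add0n !addn0. Qed.

Definition xt : {poly K} := 'X^6 + 'X^31.
Definition Mt a b c : {poly K} := xt ^+ a * 'X^(8 * b + 10 * c).

Lemma rhoE (F : ps) n : rho F n =
  \sum_(a < n.+1) \sum_(b < n.+1) \sum_(c < n.+1) F a b c * (Mt a b c)`_n.
Proof. by []. Qed.

Lemma MtE a b c : Mt a b c = 'X^(6 * a + 8 * b + 10 * c) * (1 + 'X^25) ^+ a.
Proof.
rewrite /Mt /xt.
have -> : ('X^6 + 'X^31 : {poly K}) = 'X^6 * (1 + 'X^25) by rewrite mulrDr mulr1 -exprD.
rewrite exprMn -exprM -addnA !exprD.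
by rewrite [LHS]mulrAC.
Qed.

Lemma Mt_low a b c n : (n < 6 * a + 8 * b + 10 * c)%N -> (Mt a b c)`_n = 0.
Proof. by move=> h; rewrite MtE coefXnM h. Qed.

Lemma Mt_lead a b c : (Mt a b c)`_(6 * a + 8 * b + 10 * c) = 1.
Proof.
rewrite MtE coefXnM ltnn subnn.
elim: a => [|a IH]; first by rewrite expr0 coefC.
by rewrite exprS mulrDl mul1r coefD IH coefXnM /= addr0.
Qed.

Lemma MtM a b c a' b' c' : Mt a b c * Mt a' b' c' = Mt (a + a') (b + b') (c + c').
Proof.
rewrite /Mt.
have -> : (8 * (b + b') + 10 * (c + c') = (8 * b + 10 * c) + (8 * b' + 10 * c'))%N by lia.
by rewrite !exprD; apply: mulrACA.
Qed.

Lemma rho_box (F G : ps) n : box F G n n n -> rho F n = rho G n.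
Proof.
move=> H; apply: eq_bigr => a _; apply: eq_bigr => b _; apply: eq_bigr => c _.
by rewrite H // -ltnS.
Qed.

Lemma rhoD (F G : ps) n : rho (F + G) n = rho F n + rho G n.
Proof.
rewrite !rhoE -big_split; apply: eq_bigr => a _; rewrite -big_split.
apply: eq_bigr => b _; rewrite -big_split; apply: eq_bigr => c _.
by rewrite addE mulrDl.
Qed.

Lemma rho0 n : rho 0 n = 0.
Proof. by rewrite rhoE big1 // => a _; rewrite big1 // => b _; rewrite big1 // => c _; rewrite zeroE mul0r. Qed.

Lemma rhoN (F : ps) n : rho (- F) n = - rho F n.
Proof. by apply/eqP; rewrite -subr_eq0 opprK -rhoD addNr rho0. Qed.

Lemma rho_sum I (r : seq I) (P : pred I) (F : I -> ps) n :
  rho (\sum_(i <- r | P i) F i) n = \sum_(i <- r | P i) rho (F i) n.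
Proof.
elim: r => [|i r IH]; first by rewrite !big_nil rho0.
by rewrite !big_cons; case: (P i) => //; rewrite rhoD IH.
Qed.

Lemma nested_if (a b c a0 b0 c0 : nat) (x : K) :
  (if [&& a0 == a, b0 == b & c0 == c] then x else 0) =
  if (a0 == a) then (if b0 == b then (if c0 == c then x else 0) else 0) else 0.
Proof. by case: eqP; case: eqP; case: eqP. Qed.

Lemma sum_ord_if' (n a : nat) (x : nat -> K) :
  \sum_(i < n) (if a == (i : nat) then x (i : nat) else 0) = if (a < n)%N then x a else 0.
Proof. rewrite -sum_ord_if; apply: eq_bigr => i _; by rewrite eq_sym. Qed.

Lemma triple_pick (n : nat) (f : nat -> nat -> nat -> K) a b c :
  \sum_(i < n) \sum_(j < n) \sum_(l < n)
     (if [&& a == (i:nat), b == (j:nat) & c == (l:nat)] then f i j l else 0) =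
  if [&& (a < n)%N, (b < n)%N & (c < n)%N] then f a b c else 0.
Proof.
transitivity (\sum_(i < n) if a == (i:nat) then
   \sum_(j < n) (if b == (j:nat) then \sum_(l < n) (if c == (l:nat) then f i j l else 0) else 0) else 0).
  apply: eq_bigr => i _; case: eqP => _ /=; last by rewrite big1 // => j _; rewrite big1.
  by apply: eq_bigr => j _; case: eqP => _ /=; last by rewrite big1.
rewrite (sum_ord_if' _ _ (fun i => \sum_(j < n) (if b == (j:nat) then \sum_(l < n) (if c == (l:nat) then f i j l else 0) else 0))).
case: (a < n)%N => //=.
rewrite (sum_ord_if' _ _ (fun j => \sum_(l < n) (if c == (l:nat) then f a j l else 0))).
case: (b < n)%N => //=.
by rewrite (sum_ord_if' _ _ (fun l => f a b l)).
Qed.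

Lemma rho_mono r a b c n : rho (mono r a b c) n = r * (Mt a b c)`_n.
Proof.
rewrite rhoE.
transitivity (\sum_(i < n.+1) \sum_(j < n.+1) \sum_(l < n.+1)
     (if [&& a == (i:nat), b == (j:nat) & c == (l:nat)] then r * (Mt i j l)`_n else 0)).
  apply: eq_bigr => i _; apply: eq_bigr => j _; apply: eq_bigr => l _.
  rewrite monoE (eq_sym a) (eq_sym b) (eq_sym c).
  by case: (_ && _); rewrite ?mul0r.
rewrite (triple_pick _ (fun i j l => r * (Mt i j l)`_n)).
case: ifP => // /negbT; rewrite !ltnS => H.
rewrite Mt_low ?mulr0 //.
move: H; rewrite !negb_and -!ltnNge; case/or3P => H; lia.
Qed.

Definition conv (u v : nat -> K) n := \sum_(k < n.+1) u k * v (n - k)%N.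

Definition Bx n (F : ps) : ps :=
  \sum_(a < n.+1) \sum_(b < n.+1) \sum_(c < n.+1) mono (F a b c) a b c.

Lemma Bx_box n F : box F (Bx n F) n n n.
Proof.
move=> i j l hi hj hl; rewrite /Bx !sumE.
transitivity (\sum_(a < n.+1) \sum_(b < n.+1) \sum_(c < n.+1)
   (if [&& i == (a:nat), j == (b:nat) & l == (c:nat)] then F i j l else 0)).
  by rewrite (triple_pick _ (fun _ _ _ => F i j l)) !ltnS hi hj hl.
apply: eq_bigr => a _; rewrite sumE; apply: eq_bigr => b _; rewrite sumE.
apply: eq_bigr => c _; rewrite monoE.
by case: eqP => // ->; case: eqP => // ->; case: eqP => // ->.
Qed.

Definition Phi n (F G : ps) := rho (F * G) n = conv (rho F) (rho G) n.

Lemma Phi_mono n r a b c s a' b' c' : Phi n (mono r a b c) (mono s a' b' c').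
Proof.
rewrite /Phi monoM rho_mono /conv.
under eq_bigr do rewrite !rho_mono.
rewrite -MtM coefM mulr_sumr; apply: eq_bigr => k _; ring.
Qed.

Lemma Phi_addl n F1 F2 G : Phi n F1 G -> Phi n F2 G -> Phi n (F1 + F2) G.
Proof.
rewrite /Phi mulrDl rhoD => -> ->; rewrite /conv -big_split; apply: eq_bigr => k _.
by rewrite rhoD mulrDl.
Qed.

Lemma Phi_addr n F G1 G2 : Phi n F G1 -> Phi n F G2 -> Phi n F (G1 + G2).
Proof.
rewrite /Phi mulrDr rhoD => -> ->; rewrite /conv -big_split; apply: eq_bigr => k _.
by rewrite rhoD mulrDr.
Qed.

Lemma Phi_0l n G : Phi n 0 G.
Proof. rewrite /Phi mul0r rho0 /conv big1 // => k _; by rewrite rho0 mul0r. Qed.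
Lemma Phi_0r n F : Phi n F 0.
Proof. rewrite /Phi mulr0 rho0 /conv big1 // => k _; by rewrite rho0 mulr0. Qed.

Lemma Phi_Bx n F G : Phi n (Bx n F) (Bx n G).
Proof.
rewrite /Bx.
elim/big_ind: _ => [|F1 F2|a _]; [exact: Phi_0l|exact: Phi_addl|].
elim/big_ind: _ => [|F1 F2|b _]; [exact: Phi_0l|exact: Phi_addl|].
elim/big_ind: _ => [|F1 F2|c _]; [exact: Phi_0l|exact: Phi_addl|].
elim/big_ind: _ => [|G1 G2|a' _]; [exact: Phi_0r|exact: Phi_addr|].
elim/big_ind: _ => [|G1 G2|b' _]; [exact: Phi_0r|exact: Phi_addr|].
elim/big_ind: _ => [|G1 G2|c' _]; [exact: Phi_0r|exact: Phi_addr|].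
exact: Phi_mono.
Qed.

Lemma rhoM (F G : ps) n : rho (F * G) n = conv (rho F) (rho G) n.
Proof.
have HF := @Bx_box n F; have HG := @Bx_box n G.
have -> : rho (F * G) n = rho (Bx n F * Bx n G) n.
  apply: rho_box => i j l hi hj hl; rewrite !mulE; apply: mul_loc => i' j' l' hi' hj' hl';
  apply: HF || apply: HG; lia.
rewrite Phi_Bx /conv; apply: eq_bigr => k _.
have hk := ltn_ord k.
rewrite (@rho_box F (Bx n F) k) ?(@rho_box G (Bx n G) (n - k)) //.
- move=> i j l hi hj hl; apply: HG; lia.
- move=> i j l hi hj hl; apply: HF; lia.
Qed.

End R.

Section S.
Variable K : fieldType.
Local Notation ps := (ps3 K).

Lemma rho_sum_ps3 (s : seq ps) n : rho (sum_ps3 s) n = \sum_(F <- s) rho F n.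
Proof.
elim: s => [|F s IH]; first by rewrite big_nil (rho0 K).
by rewrite big_cons -IH -rhoD.
Qed.


Lemma rho_f1 n : rho (f1 K) n = 0.
Proof.
rewrite rho_sum_ps3 !big_cons big_nil !rho_mono.
rewrite -!coefZ addr0 -!coefD.
match goal with |- nth _ (polyseq ?p) n = 0 => suff -> : p = 0 by rewrite coef0 end.
rewrite -!mul_polyC.
rewrite /Mt /xt; ring.
Qed.

Lemma rho_f2 n : rho (f2 K) n = 0.
Proof.
rewrite rho_sum_ps3 !big_cons big_nil !rho_mono.
rewrite -!coefZ addr0 -!coefD.
match goal with |- nth _ (polyseq ?p) n = 0 => suff -> : p = 0 by rewrite coef0 end.
rewrite -!mul_polyC.
rewrite /Mt /xt; ring.
Qed.

Lemma rho_f3 n : rho (f3 K) n = 0.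
Proof.
rewrite rho_sum_ps3 !big_cons big_nil !rho_mono.
rewrite -!coefZ addr0 -!coefD.
match goal with |- nth _ (polyseq ?p) n = 0 => suff -> : p = 0 by rewrite coef0 end.
rewrite -!mul_polyC.
rewrite /Mt /xt; ring.
Qed.

Lemma rho_f4 n : rho (f4 K) n = 0.
Proof.
rewrite rho_sum_ps3 !big_cons big_nil !rho_mono.
rewrite -!coefZ addr0 -!coefD.
match goal with |- nth _ (polyseq ?p) n = 0 => suff -> : p = 0 by rewrite coef0 end.
rewrite -!mul_polyC.
rewrite /Mt /xt; ring.
Qed.

Lemma rho_fgens i n : rho (fgens K i) n = 0.
Proof.
case: i => [[|[|[|[|i]]]] Hi] //=; by rewrite ?rho_f1 ?rho_f2 ?rho_f3 ?rho_f4.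
Qed.

Lemma ideal_sum n (g : 'I_n -> ps) (h : 'I_n -> ps) :
  (fun a b c => \sum_(i < n) ps3_mul (h i) (g i) a b c) = \sum_(i < n) h i * g i.
Proof. by apply: ps_ext => a b c; rewrite sumE. Qed.

Lemma ideal_P F : ps3_ideal (@fgens K) F -> P_Moh F.
Proof.
case=> h ->; rewrite ideal_sum => n.
rewrite rho_sum big1 // => i _.
by rewrite rhoM /conv big1 // => k _; rewrite rho_fgens mulr0.
Qed.

End S.

Section S.
Variable K : fieldType.
Local Notation ps := (ps3 K).
Local Notation mono := (@mono K).
Local Notation C := (@C K).
Local Notation X := (@X K).
Local Notation Y := (@Y K).
Local Notation Z := (@Z K).

Definition pi0 (F : ps) : ps := fun a b c => if a == 0%N then F 0%N b c else 0.

Lemma pi0D F G : pi0 (F + G) = pi0 F + pi0 G.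
Proof. apply: ps_ext => a b c; rewrite /pi0 !addE; by case: eqP; rewrite ?addr0. Qed.
Lemma pi0N F : pi0 (- F) = - pi0 F.
Proof. apply: ps_ext => a b c; rewrite /pi0 !oppE; by case: eqP; rewrite ?oppr0. Qed.
Lemma pi0B F G : pi0 (F - G) = pi0 F - pi0 G.
Proof. by rewrite pi0D pi0N. Qed.
Lemma pi00 : pi0 0 = 0.
Proof. by apply: ps_ext => a b c; rewrite /pi0; case: eqP. Qed.
Lemma pi0_sum I (r : seq I) (P : pred I) (F : I -> ps) :
  pi0 (\sum_(i <- r | P i) F i) = \sum_(i <- r | P i) pi0 (F i).
Proof.
elim: r => [|i r IH]; first by rewrite !big_nil pi00.
by rewrite !big_cons; case: (P i) => //; rewrite pi0D IH.
Qed.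

Lemma pi0M F G : pi0 (F * G) = pi0 F * pi0 G.
Proof.
apply: ps_ext => a b c; rewrite /pi0 !mulE /ps3_mul.
case: a => [|a] /=.
  by rewrite !big_ord_recl !big_ord0 !addr0 /=.
apply/esym; rewrite big1 // => i _; rewrite big1 // => j _; rewrite big1 // => l _.
case: eqP => [Hi|]; last by rewrite mul0r.
by rewrite Hi subn0 /= mulr0.
Qed.

Lemma pi0_mono r a b c : pi0 (mono r a b c) = if a == 0%N then mono r a b c else 0.
Proof.
apply: ps_ext => A B D; rewrite /pi0.
case: (A =P 0%N) => [->|HA]; case: (a =P 0%N) => [->|Ha] //=.
- by rewrite monoE zeroE eq_sym (introF eqP Ha).
- by rewrite monoE (introF eqP HA).
Qed.

Lemma pi0_1 : pi0 1 = 1. Proof. exact: (pi0_mono 1 0 0 0). Qed.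
Lemma pi0X : pi0 X = 0. Proof. exact: (pi0_mono 1 1 0 0). Qed.
Lemma pi0Y : pi0 Y = Y. Proof. exact: (pi0_mono 1 0 1 0). Qed.
Lemma pi0Z : pi0 Z = Z. Proof. exact: (pi0_mono 1 0 0 1). Qed.
Lemma pi0C r : pi0 (C r) = C r. Proof. exact: (pi0_mono r 0 0 0). Qed.
Lemma pi0X_exp F k : pi0 (F ^+ k) = pi0 F ^+ k.
Proof. elim: k => [|k IH]; first exact: pi0_1. by rewrite !exprS pi0M IH. Qed.

Definition shift (E : ps) : ps := fun a b c => E a.+1 b c.

Lemma XE F a b c : (X * F) a b c = if (0 < a)%N then F a.-1 b c else 0.
Proof.
rewrite mulE monoM_coef !subn0 /= mul1r andbT.
by rewrite subn1.
Qed.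

Lemma shiftP E : pi0 E = 0 -> E = X * shift E.
Proof.
move=> H; apply: ps_ext => a b c; rewrite XE.
case: a => [|a] //=.
by have := congr1 (fun F : ps => F 0%N b c) H; rewrite /pi0 eqxx.
Qed.

End S.

Section S.
Variable K : fieldType.
Local Notation ps := (ps3 K).
Local Notation mono := (@mono K).
Local Notation C := (@C K).
Local Notation X := (@X K).
Local Notation Y := (@Y K).
Local Notation Z := (@Z K).

Definition inv1 : ps := fun a b c => if [&& a == 0%N, b == 0%N & (c %% 5 == 0)%N] then 1 else 0.
Definition inv2 : ps := fun a b c => if (a == 0%N) && (b == 5 * c)%N then 1 else 0.
Definition u1 : ps := 1 - Z ^+ 5.
Definition u2 : ps := 1 - Y ^+ 5 * Z.

Lemma oneE a b c : (1 : ps) a b c = if [&& a == 0%N, b == 0%N & c == 0%N] then 1 else 0.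
Proof. by []. Qed.

Lemma inv1P : inv1 * u1 = 1.
Proof.
apply: ps_ext => a b c.
rewrite /u1 mulrBr mulr1 mulrC mono_expZ subE mulE monoM_coef oneE /inv1 !subn0 /= mul1r.
case: (leqP 5 c) => hc.
  have -> : ((c - 5) %% 5 = c %% 5)%N.
    by rewrite -{2}(subnK hc) -modnDmr modnn addn0.
  have -> : (c == 0%N) = false by apply/negbTE/eqP; lia.
  by rewrite !andbF; case: (_ && _); rewrite ?subrr.
rewrite modn_small //; case: (_ && _); rewrite ?subrr.
all: by rewrite ?oppr0 ?addr0.
Qed.

Lemma inv2P : inv2 * u2 = 1.
Proof.
apply: ps_ext => a b c.
rewrite /u2 mulrBr mulr1 mulrC mono_expY /Z monoM subE mulE monoM_coef oneE /inv2 !subn0 /= mul1r.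
case: (leqP 5 b) => hb; case: (leqP 1 c) => hc /=.
- have -> : (b - 5 == 5 * (c - 1))%N = (b == 5 * c)%N by apply/eqP/eqP; lia.
  have -> : (b == 0%N) = false by apply/negbTE/eqP; lia.
  by rewrite mul1r subrr !andbF.
- have -> : (b == 5 * c)%N = false by apply/negbTE/eqP; lia.
  have -> : (b == 0%N) = false by apply/negbTE/eqP; lia.
  by rewrite !andbF /= ?oppr0 ?addr0.
- have -> : (b == 5 * c)%N = false by apply/negbTE/eqP; lia.
  have -> : (c == 0%N) = false by apply/negbTE/eqP; lia.
  by rewrite !andbF /= ?oppr0 ?addr0.
- have -> : (c == 0%N) by lia.
  have -> : (b == 5 * c)%N = (b == 0%N) by apply/eqP/eqP; lia.
  by rewrite andbT; case: (_ && _); rewrite ?oppr0 ?addr0.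
Qed.

Ltac pi0f := rewrite /sum_ps3 /= !pi0D !pi0_mono /= pi00 !addr0 ?add0r ?addr0 !monoN !monoCXYZ /u1 /u2 ?C1; ring.

Lemma pi0_f1 : pi0 (f1 K) = C 3 * Y ^+ 3 * u1.
Proof. rewrite /f1. pi0f. Qed.
Lemma pi0_f2 : pi0 (f2 K) = C 2 * Y ^+ 2 * Z * u2.
Proof. rewrite /f2. pi0f. Qed.
Lemma pi0_f3 : pi0 (f3 K) = Y * Z ^+ 2 * u2.
Proof. rewrite /f3. pi0f. Qed.
Lemma pi0_f4 : pi0 (f4 K) = Z ^+ 3 * u2.
Proof. rewrite /f4. pi0f. Qed.

Definition Q1 (G : ps) : ps := fun a b c => if a == 0%N then G 0%N (b + 3)%N c else 0.
Definition Q2 (G : ps) : ps := fun a b c => if (a == 0%N) && (b == 0%N) then G 0%N 2%N (c + 1)%N else 0.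
Definition Q3 (G : ps) : ps := fun a b c => if (a == 0%N) && (b == 0%N) then G 0%N 1%N (c + 2)%N else 0.
Definition Q4 (G : ps) : ps := fun a b c => if (a == 0%N) && (b == 0%N) then G 0%N 0%N (c + 3)%N else 0.

Lemma pi0_decomp_mono G : pi0 G =
  mono (G 0 0 0)%N 0 0 0 + mono (G 0 1 0)%N 0 1 0 + mono (G 0 0 1)%N 0 0 1 +
  mono (G 0 2 0)%N 0 2 0 + mono (G 0 1 1)%N 0 1 1 + mono (G 0 0 2)%N 0 0 2 +
  mono 1 0 3 0 * Q1 G + mono 1 0 2 1 * Q2 G + mono 1 0 1 2 * Q3 G + mono 1 0 0 3 * Q4 G.
Proof.
apply: ps_ext => a b c; rewrite !addE !mulE !monoM_coef !monoE /pi0 /Q1 /Q2 /Q3 /Q4 !subn0 /=.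
case: a => [|a] /=; last by rewrite !mulr0 !if_same !addr0.
case: b => [|[|[|b]]]; case: c => [|[|[|c]]] /=;
  rewrite ?subSS ?subn0 ?addn1 ?addn2 ?addn3 /= ?mulr0 ?mul1r ?addr0 ?add0r //.
Qed.

Arguments f1 : simpl never.
Arguments f2 : simpl never.
Arguments f3 : simpl never.
Arguments f4 : simpl never.

Definition b6 (i : 'I_6) : ps :=
  match val i with 0 => 1 | 1 => Y | 2 => Z | 3 => Y ^+ 2 - X * Z
  | 4 => Y * Z - X ^+ 3 | _ => Z ^+ 2 - X ^+ 2 * Y end.
Definition cst (G : ps) (i : 'I_6) : K :=
  match val i with 0 => G 0 0 0 | 1 => G 0 1 0 | 2 => G 0 0 1 | 3 => G 0 2 0
  | 4 => G 0 1 1 | _ => G 0 0 2 end%N.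
Definition pj (G : ps) (j : 'I_4) : ps :=
  match val j with 0 => Q1 G * inv1 * C (3^-1) | 1 => Q2 G * inv2 * C (2^-1)
  | 2 => Q3 G * inv2 | _ => Q4 G * inv2 end.

Lemma pi0_Q1 G : pi0 (Q1 G) = Q1 G.
Proof. by apply: ps_ext => a b c; rewrite /pi0 /Q1; case: eqP => // ->. Qed.
Lemma pi0_Q2 G : pi0 (Q2 G) = Q2 G.
Proof. by apply: ps_ext => a b c; rewrite /pi0 /Q2; case: eqP => // ->. Qed.
Lemma pi0_Q3 G : pi0 (Q3 G) = Q3 G.
Proof. by apply: ps_ext => a b c; rewrite /pi0 /Q3; case: eqP => // ->. Qed.
Lemma pi0_Q4 G : pi0 (Q4 G) = Q4 G.
Proof. by apply: ps_ext => a b c; rewrite /pi0 /Q4; case: eqP => // ->. Qed.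
Lemma pi0_inv1 : pi0 inv1 = inv1.
Proof. by apply: ps_ext => a b c; rewrite /pi0 /inv1; case: eqP => // ->. Qed.
Lemma pi0_inv2 : pi0 inv2 = inv2.
Proof. by apply: ps_ext => a b c; rewrite /pi0 /inv2; case: eqP => // ->. Qed.

Lemma stepP G : (2 : K) != 0 -> (3 : K) != 0 ->
  pi0 (G - \sum_(i < 6) C (cst G i) * b6 i - \sum_(j < 4) pj G j * fgens K j) = 0.
Proof.
move=> h2 h3.
rewrite !pi0B !pi0_sum !big_ord_recl !big_ord0 /=.
rewrite /cst /pj /b6 /=.
rewrite /fgens /= !pi0M pi0_f1 pi0_f2 pi0_f3 pi0_f4.
do 4 rewrite ?pi0M ?pi0B ?pi0D ?pi0X_exp ?pi0X ?pi0Y ?pi0Z ?pi0C ?pi0_1 ?pi00.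
rewrite pi0_Q1 pi0_Q2 pi0_Q3 pi0_Q4 pi0_inv1 pi0_inv2.
have e1 : Q1 G * inv1 * C 3^-1 * (C 3 * Y ^+ 3 * u1) = Y ^+ 3 * Q1 G.
  transitivity (Y ^+ 3 * Q1 G * (inv1 * u1) * (C 3^-1 * C 3)); first ring.
  by rewrite inv1P -CM mulVf // C1 !mulr1.
have e2 : Q2 G * inv2 * C 2^-1 * (C 2 * Y ^+ 2 * Z * u2) = Y ^+ 2 * Z * Q2 G.
  transitivity (Y ^+ 2 * Z * Q2 G * (inv2 * u2) * (C 2^-1 * C 2)); first ring.
  by rewrite inv2P -CM mulVf // C1 !mulr1.
have e3 : Q3 G * inv2 * (Y * Z ^+ 2 * u2) = Y * Z ^+ 2 * Q3 G.
  transitivity (Y * Z ^+ 2 * Q3 G * (inv2 * u2)); first ring.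
  by rewrite inv2P mulr1.
have e4 : Q4 G * inv2 * (Z ^+ 3 * u2) = Z ^+ 3 * Q4 G.
  transitivity (Z ^+ 3 * Q4 G * (inv2 * u2)); first ring.
  by rewrite inv2P mulr1.
rewrite e1 e2 e3 e4 pi0_decomp_mono !monoCXYZ C1.
ring.
Qed.

End S.

Section S.
Variable K : fieldType.
Local Notation ps := (ps3 K).
Local Notation mono := (@mono K).
Local Notation C := (@C K).
Local Notation X := (@X K).
Local Notation Y := (@Y K).
Local Notation Z := (@Z K).
Local Notation b6 := (@b6 K).

Hypothesis h2 : (2 : K) != 0.
Hypothesis h3 : (3 : K) != 0.

Definition nxt (G : ps) : ps :=
  shift (G - \sum_(i < 6) C (cst G i) * b6 i - \sum_(j < 4) pj G j * fgens K j).

Variable F : ps.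
Fixpoint Gs (k : nat) : ps := if k is k'.+1 then nxt (Gs k') else F.

Lemma Gs_step k : Gs k =
  \sum_(i < 6) C (cst (Gs k) i) * b6 i + \sum_(j < 4) pj (Gs k) j * fgens K j + X * Gs k.+1.
Proof.
rewrite /= /nxt -shiftP; last exact: stepP.
ring.
Qed.

Lemma pi0_pj (G : ps) j : pi0 (pj G j) = pj G j.
Proof.
rewrite /pj; case: j => [[|[|[|j]]] Hj] /=;
rewrite !pi0M ?pi0_Q1 ?pi0_Q2 ?pi0_Q3 ?pi0_Q4 ?pi0_inv1 ?pi0_inv2 ?pi0C //.
Qed.

Lemma pj_xfree (G : ps) j a b c : (0 < a)%N -> pj G j a b c = 0.
Proof.
move=> ha; rewrite -pi0_pj /pi0; by case: a ha.
Qed.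

Definition Ht (k : nat) (j : 'I_4) : ps := fun a b c => pj (Gs (k + a)) j 0%N b c.
Definition Rt (k : nat) (i : 'I_6) : ps :=
  fun a b c => if (b == 0%N) && (c == 0%N) then cst (Gs (k + a)) i else 0.

Lemma Ht_step k j : Ht k j = pj (Gs k) j + X * Ht k.+1 j.
Proof.
apply: ps_ext => a b c; rewrite addE XE /Ht.
case: a => [|a] /=; first by rewrite addn0 addr0.
by rewrite (@pj_xfree _ _ a.+1) // add0r addnS.
Qed.

Lemma CE r a b c : C r a b c = if [&& a == 0%N, b == 0%N & c == 0%N] then r else 0.
Proof. by []. Qed.

Lemma Rt_step k i : Rt k i = C (cst (Gs k) i) + X * Rt k.+1 i.
Proof.
apply: ps_ext => a b c; rewrite addE XE /Rt CE.
case: a => [|a] /=; first by rewrite addn0 addr0.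
by rewrite add0r addnS.
Qed.

Definition Dk k : ps := Gs k - \sum_(j < 4) Ht k j * fgens K j - \sum_(i < 6) Rt k i * b6 i.

Lemma Dk_step k : Dk k = X * Dk k.+1.
Proof.
have E1 : \sum_(j < 4) Ht k j * fgens K j =
   \sum_(j < 4) pj (Gs k) j * fgens K j + X * \sum_(j < 4) Ht k.+1 j * fgens K j.
  by rewrite mulr_sumr -big_split; apply: eq_bigr => j _; rewrite Ht_step mulrDl mulrA.
have E2 : \sum_(i < 6) Rt k i * b6 i =
   \sum_(i < 6) C (cst (Gs k) i) * b6 i + X * \sum_(i < 6) Rt k.+1 i * b6 i.
  by rewrite mulr_sumr -big_split; apply: eq_bigr => i _; rewrite Rt_step mulrDl mulrA.
rewrite /Dk E1 E2 {1}Gs_step; ring.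
Qed.

Lemma Dk0 k a b c : Dk k a b c = 0.
Proof.
elim: a k => [|a IH] k; rewrite Dk_step XE //=.
Qed.

Lemma decomp : F = \sum_(j < 4) Ht 0 j * fgens K j + \sum_(i < 6) Rt 0 i * b6 i.
Proof.
have : Dk 0 = 0 by apply: ps_ext => a b c; rewrite Dk0.
move=> H; apply/eqP; rewrite -subr_eq0; apply/eqP; transitivity (Dk 0); last exact: H.
rewrite /Dk /=; ring.
Qed.

End S.

Section S.
Variable K : fieldType.
Local Notation ps := (ps3 K).
Local Notation mono := (@mono K).
Local Notation C := (@C K).
Local Notation X := (@X K).
Local Notation Y := (@Y K).
Local Notation Z := (@Z K).
Local Notation b6 := (@b6 K).
Local Notation Mt := (@Mt K).
Local Notation xt := (@xt K).

Definition RP (F : ps) (p : {poly K}) := forall n, rho F n = p`_n.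

Lemma RP_add F G p q : RP F p -> RP G q -> RP (F + G) (p + q).
Proof. by move=> HF HG n; rewrite rhoD HF HG coefD. Qed.
Lemma RP_opp F p : RP F p -> RP (- F) (- p).
Proof. by move=> HF n; rewrite rhoN HF coefN. Qed.
Lemma RP_sub F G p q : RP F p -> RP G q -> RP (F - G) (p - q).
Proof. by move=> HF HG; apply: RP_add => //; apply: RP_opp. Qed.
Lemma RP_mul F G p q : RP F p -> RP G q -> RP (F * G) (p * q).
Proof.
move=> HF HG n; rewrite rhoM /conv coefM; apply: eq_bigr => k _; by rewrite HF HG.
Qed.
Lemma RP_mono r a b c : RP (mono r a b c) (r *: Mt a b c).
Proof. by move=> n; rewrite rho_mono coefZ. Qed.
Lemma RP_1 : RP 1 1.
Proof.
move=> n; have := RP_mono 1 0 0 0 n; rewrite scale1r /Mt expr0 mul1r muln0 => ->.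
by [].
Qed.
Lemma RP_X : RP X xt.
Proof. move=> n; by rewrite /X RP_mono scale1r /Mt expr1 !muln0 mulr1. Qed.
Lemma RP_Y : RP Y 'X^8.
Proof. move=> n; by rewrite /Y RP_mono scale1r /Mt expr0 mul1r. Qed.
Lemma RP_Z : RP Z 'X^10.
Proof. move=> n; by rewrite /Z RP_mono scale1r /Mt expr0 mul1r. Qed.
Lemma RP_exp F p k : RP F p -> RP (F ^+ k) (p ^+ k).
Proof.
move=> HF; elim: k => [|k IH]; first exact: RP_1.
by rewrite !exprS; apply: RP_mul.
Qed.

Definition e6 (i : 'I_6) : nat :=
  match val i with 0 => 0 | 1 => 8 | 2 => 10 | 3 => 41 | 4 => 43 | _ => 45 end%N.
Definition gam (i : 'I_6) : {poly K} :=
  match val i with 0 => 1 | 1 => 1 | 2 => 1 | 3 => -1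
  | 4 => -3%:P - 3%:P * 'X^25 - 'X^50 | _ => -2%:P - 'X^25 end.

Lemma RP_b6 i : RP (b6 i) ('X^(e6 i) * gam i).
Proof.
case: i => [[|[|[|[|[|[|i]]]]]] Hi] //; rewrite /b6 /e6 /gam /=.
- by rewrite mulr1; exact: RP_1.
- by rewrite mulr1; exact: RP_Y.
- by rewrite mulr1; exact: RP_Z.
- have -> : ('X^41 * -1 : {poly K}) = 'X^8 ^+ 2 - xt * 'X^10 by rewrite /xt; ring.
  by apply: RP_sub; [apply: RP_exp; exact: RP_Y| apply: RP_mul; [exact: RP_X|exact: RP_Z]].
- have -> : ('X^43 * (-3%:P - 3%:P * 'X^25 - 'X^50) : {poly K}) = 'X^8 * 'X^10 - xt ^+ 3.
    rewrite /xt; ring.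
  by apply: RP_sub; [apply: RP_mul; [exact: RP_Y|exact: RP_Z]| apply: RP_exp; exact: RP_X].
- have -> : ('X^45 * (-2%:P - 'X^25) : {poly K}) = 'X^10 ^+ 2 - xt ^+ 2 * 'X^8.
    rewrite /xt; ring.
  by apply: RP_sub; [apply: RP_exp; exact: RP_Z| apply: RP_mul; [apply: RP_exp; exact: RP_X|exact: RP_Y]].
Qed.

Definition Rx (r : nat -> K) : ps := fun a b c => if (b == 0%N) && (c == 0%N) then r a else 0.

Lemma rho_Rx r m : rho (Rx r) m = \sum_(a < m.+1) r a * (Mt a 0 0)`_m.
Proof.
rewrite rhoE; apply: eq_bigr => a _.
rewrite big_ord_recl [X in _ + X]big1 ?addr0; last first.
  move=> b _; rewrite big1 // => c _; by rewrite /Rx /= mul0r.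
rewrite big_ord_recl [X in _ + X]big1 ?addr0 //.
by move=> c _; rewrite /Rx /= mul0r.
Qed.

Lemma rho_Rx_low r o m : (forall a, (a < o)%N -> r a = 0) -> (m < 6 * o)%N -> rho (Rx r) m = 0.
Proof.
move=> H hm; rewrite rho_Rx big1 // => a _.
case: (ltnP a o) => ha; first by rewrite H // mul0r.
by rewrite Mt_low ?mulr0 //; lia.
Qed.

Lemma rho_Rx_lead r o : (forall a, (a < o)%N -> r a = 0) -> rho (Rx r) (6 * o) = r o.
Proof.
move=> H; rewrite rho_Rx.
transitivity (\sum_(a < (6 * o).+1) (if (a : nat) == o then r o else 0)).
  apply: eq_bigr => a _; case: eqP => [->|Ha].
    by have := @Mt_lead K o 0 0; rewrite !muln0 !addn0 => ->; rewrite mulr1.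
  case: (ltnP a o) => ha; first by rewrite H // mul0r.
  by rewrite Mt_low ?mulr0 //; lia.
by rewrite (sum_ord_if _ _ (fun _ => r o)) ltnS; case: o H => //= o _; rewrite ifT //; lia.
Qed.

Lemma conv_low (u v : nat -> K) U V k :
  (forall m, (m < U)%N -> u m = 0) -> (forall j, (j < V)%N -> v j = 0) ->
  (k < U + V)%N -> conv u v k = 0.
Proof.
move=> hu hv hk; rewrite /conv big1 // => m _.
have hm := ltn_ord m.
case: (ltnP m U) => h; first by rewrite hu // mul0r.
by rewrite hv ?mulr0 //; lia.
Qed.

Lemma conv_lead (u v : nat -> K) U V :
  (forall m, (m < U)%N -> u m = 0) -> (forall j, (j < V)%N -> v j = 0) ->
  conv u v (U + V) = u U * v V.
Proof.
move=> hu hv; rewrite /conv.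
transitivity (\sum_(m < (U + V).+1) (if (m : nat) == U then u U * v V else 0)).
  apply: eq_bigr => m _; have hm := ltn_ord m.
  case: eqP => [->|Hm]; first by rewrite addKn.
  case: (ltnP m U) => h; first by rewrite hu // mul0r.
  by rewrite hv ?mulr0 //; lia.
by rewrite (sum_ord_if _ _ (fun _ => u U * v V)) ifT //; lia.
Qed.

Lemma e6_inj i j o o' : (6 * o + e6 i = 6 * o' + e6 j)%N -> i = j.
Proof.
move=> H.
have := congr1 (modn^~ 6%N) H; rewrite /= !(mulnC 6) !modnMDl.
clear H.
case: i => [[|[|[|[|[|[|i]]]]]] Hi] //; case: j => [[|[|[|[|[|[|j]]]]]] Hj] //= _;
 by apply: val_inj.
Qed.

Hypothesis h2 : (2 : K) != 0.
Hypothesis h3 : (3 : K) != 0.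

Lemma lam_neq0 i : (gam i)`_0 != 0.
Proof.
case: i => [[|[|[|[|[|[|i]]]]]] Hi] //; rewrite /gam /= ?coef1 ?oner_eq0 //.
- by rewrite coefN coef1 oppr_eq0 oner_eq0.
- rewrite !coefB coefN coefC coefMXn coefXn /= !subr0 oppr_eq0; exact: h3.
- rewrite !coefB coefN coefC coefXn /= subr0 oppr_eq0; exact: h2.
Qed.

Lemma b6_low i j : (j < e6 i)%N -> rho (b6 i) j = 0.
Proof. by move=> h; rewrite RP_b6 coefXnM h. Qed.
Lemma b6_lead i : rho (b6 i) (e6 i) = (gam i)`_0.
Proof. by rewrite RP_b6 coefXnM ltnn subnn. Qed.

Lemma indep (r : 'I_6 -> nat -> K) :
  (forall k, \sum_(i < 6) rho (Rx (r i) * b6 i) k = 0) -> forall i a, r i a = 0.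
Proof.
move=> Hsum i0 a0; apply/eqP/negP => /negP Hnz.
pose V v := [exists i : 'I_6, [exists o : 'I_(v.+1),
   [&& v == (6 * o + e6 i)%N, r i o != 0 & [forall a : 'I_o, r i a == 0]]]].
have minP : forall i, (exists a, r i a != 0) ->
    exists o, [/\ r i o != 0, (forall a, (a < o)%N -> r i a = 0) & V (6 * o + e6 i)%N].
  move=> i ex; case: (ex_minnP ex) => o Ho Hmin; exists o; split => //.
    move=> a ha; apply/eqP; apply/negP => /negP Ha; have := Hmin a Ha; lia.
  apply/existsP; exists i; apply/existsP.
  have ho : (o < (6 * o + e6 i).+1)%N by lia.
  exists (Ordinal ho); rewrite /= eqxx Ho /=; apply/forallP => a; apply/eqP.
  case: a => a ha /=; apply/eqP; apply/negP => /negP Ha; have := Hmin a Ha; lia.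
have exV : exists v, V v.
  have [o [_ _ Vo]] := minP i0 (ex_intro _ a0 Hnz); by exists (6 * o + e6 i0)%N.
case: (ex_minnP exV) => v0 /existsP[i1 /existsP[o1 /and3P[/eqP Hv Hr1 /forallP Hz]]] Hmin.
have Hz' : forall a, (a < o1)%N -> r i1 a = 0.
  by move=> a ha; apply/eqP; exact: (Hz (Ordinal ha)).
have := Hsum v0.
rewrite (bigD1 i1) //= big1 ?addr0; last first.
  move=> i Hi; rewrite rhoM.
  case: (pselect (exists a, r i a != 0)) => [ex|nex].
    have [o [Ho Hlow Vo]] := minP i ex.
    have hle := Hmin _ Vo.
    have hne : v0 != (6 * o + e6 i)%N.
      apply/eqP => E; move: Hi; rewrite (@e6_inj i1 i o1 o) ?eqxx //; by rewrite -Hv.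
    apply: (@conv_low _ _ (6 * o) (e6 i)).
    - by move=> m hm; apply: rho_Rx_low hm.
    - by move=> j hj; apply: b6_low.
    - by rewrite ltn_neqAle hne hle.
  rewrite /conv big1 // => m _; rewrite rho_Rx big1 ?mul0r // => a _.
  have -> : r i a = 0 by apply/eqP; apply/negP => /negP Ha; apply: nex; exists a.
  by rewrite mul0r.
rewrite rhoM Hv conv_lead; last first.
- by move=> j hj; apply: b6_low.
- by move=> m hm; apply: rho_Rx_low hm.
rewrite rho_Rx_lead // b6_lead => /eqP; apply/negP; by rewrite mulf_neq0 // lam_neq0.
Qed.

End S.

Section S.
Variable K : fieldType.
Local Notation ps := (ps3 K).
Local Notation b6 := (@b6 K).

Hypothesis h2 : (2 : K) != 0.
Hypothesis h3 : (3 : K) != 0.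

Lemma P_ideal (F : ps) : P_Moh F -> ps3_ideal (@fgens K) F.
Proof.
move=> HP.
have Hd := decomp h2 h3 F.
have HR : forall i, Rt F 0 i = Rx (fun a => cst (Gs F a) i).
  by move=> i; apply: ps_ext => a b c; rewrite /Rt /Rx add0n.
have HH : forall n, rho (\sum_(j < 4) Ht F 0 j * fgens K j) n = 0.
  move=> n; rewrite rho_sum big1 // => j _; rewrite rhoM /conv big1 // => k _.
  by rewrite rho_fgens mulr0.
have Hs : forall k, \sum_(i < 6) rho (Rx (fun a => cst (Gs F a) i) * b6 i) k = 0.
  move=> k; have E := HP k; rewrite Hd rhoD HH add0r rho_sum in E.
  rewrite -[RHS]E; apply: eq_bigr => i _; by rewrite HR.
have Hz := indep h2 h3 Hs.
exists (Ht F 0); rewrite ideal_sum {1}Hd.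
rewrite [X in _ + X]big1 ?addr0 // => i _.
rewrite HR.
have -> : Rx (fun a => cst (Gs F a) i) = 0.
  by apply: ps_ext => a b c; rewrite /Rx Hz; case: (_ && _).
by rewrite mul0r.
Qed.

End S.

Section S.
Variable K : fieldType.
Local Notation ps := (ps3 K).

Definition low (d : nat) (G : ps) := forall a b c, (a + b + c < d)%N -> G a b c = 0.

Lemma low_mul d (E G : ps) : low d G -> low d (E * G).
Proof.
move=> HG a b c h; rewrite mulE /ps3_mul big1 // => i _; rewrite big1 // => j _.
rewrite big1 // => l _; rewrite HG ?mulr0 //.
have := ltn_ord i; have := ltn_ord j; have := ltn_ord l; lia.
Qed.

Lemma low_add d (E G : ps) : low d E -> low d G -> low d (E + G).
Proof. by move=> HE HG a b c h; rewrite addE HE // HG // addr0. Qed.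

Lemma low_sum d n (G : 'I_n -> ps) : (forall i, low d (G i)) -> low d (\sum_(i < n) G i).
Proof.
move=> H; elim/big_ind: _ => [a b c _|x y|i _]; [by []|exact: low_add|exact: H].
Qed.

Lemma mul_deg d (E G : ps) a b c : low d G -> (a + b + c = d)%N ->
  (E * G) a b c = E 0%N 0%N 0%N * G a b c.
Proof.
move=> HG hd; rewrite mulE /ps3_mul.
rewrite big_ord_recl [X in _ + X]big1 ?addr0; last first.
  move=> i _; rewrite big1 // => j _; rewrite big1 // => l _.
  rewrite HG ?mulr0 //; have := ltn_ord i; have := ltn_ord j; have := ltn_ord l.
  rewrite ?lift0; lia.
rewrite big_ord_recl [X in _ + X]big1 ?addr0; last first.
  move=> j _; rewrite big1 // => l _.
  rewrite HG ?mulr0 //; have := ltn_ord j; have := ltn_ord l.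
  rewrite ?lift0; lia.
rewrite big_ord_recl [X in _ + X]big1 ?addr0; last first.
  move=> l _; rewrite HG ?mulr0 //; have := ltn_ord l.
  rewrite ?lift0; lia.
by rewrite /= !subn0.
Qed.

Lemma f1_low : low 3 (f1 K).
Proof. move=> a b c h; rewrite /f1 /f2 /f3 /f4 /sum_ps3 /= /ps3_add /ps3_mono /ps3_zero;
  case: a h => [|[|[|a]]]; case: b => [|[|[|b]]]; case: c => [|[|[|c]]] //= _; rewrite ?addr0; reflexivity. Qed.
Lemma f2_low : low 3 (f2 K).
Proof. move=> a b c h; rewrite /f1 /f2 /f3 /f4 /sum_ps3 /= /ps3_add /ps3_mono /ps3_zero;
  case: a h => [|[|[|a]]]; case: b => [|[|[|b]]]; case: c => [|[|[|c]]] //= _; rewrite ?addr0; reflexivity. Qed.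
Lemma f3_low : low 3 (f3 K).
Proof. move=> a b c h; rewrite /f1 /f2 /f3 /f4 /sum_ps3 /= /ps3_add /ps3_mono /ps3_zero;
  case: a h => [|[|[|a]]]; case: b => [|[|[|b]]]; case: c => [|[|[|c]]] //= _; rewrite ?addr0; reflexivity. Qed.
Lemma f4_low : low 3 (f4 K).
Proof. move=> a b c h; rewrite /f1 /f2 /f3 /f4 /sum_ps3 /= /ps3_add /ps3_mono /ps3_zero;
  case: a h => [|[|[|a]]]; case: b => [|[|[|b]]]; case: c => [|[|[|c]]] //= _; rewrite ?addr0; reflexivity. Qed.

Lemma fgens_low i : low 3 (fgens K i).
Proof.
case: i => [[|[|[|[|i]]]] Hi] //=; by [exact: f1_low|exact: f2_low|exact: f3_low|exact: f4_low].
Qed.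

Definition dd (e : 'I_4) : K := match val e with 0 => 3 | 1 => 2 | _ => 1 end.

Lemma f_deg3 (i e : 'I_4) : fgens K i 0 (3 - e)%N e = if (i : nat) == e then dd e else 0.
Proof.
case: i => [[|[|[|[|i]]]] Hi] //; case: e => [[|[|[|[|e]]]] He] //;
rewrite /fgens /dd /= /f1 /f2 /f3 /f4 /sum_ps3 /= /ps3_add /ps3_mono /ps3_zero /=;
rewrite ?addr0 ?add0r; reflexivity.
Qed.

Lemma dd_neq0 e : (2 : K) != 0 -> (3 : K) != 0 -> dd e != 0.
Proof. by move=> h2 h3; case: e => [[|[|[|[|e]]]] He] //=; rewrite /dd /= oner_eq0. Qed.

End S.

Section S.
Variable K : fieldType.
Local Notation ps := (ps3 K).
Local Notation dd := (@dd K).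

Hypothesis h2 : (2 : K) != 0.
Hypothesis h3 : (3 : K) != 0.

Lemma delta_sum n (g : 'I_n -> ps) i :
  \sum_(j < n) (if j == i then 1 else 0) * g j = g i.
Proof.
rewrite (bigD1 i) //= eqxx mul1r big1 ?addr0 // => j /negbTE ->; by rewrite mul0r.
Qed.

Lemma min_gens n (g : 'I_n -> ps) :
  (forall F : ps, P_Moh F <-> ps3_ideal g F) -> (4 <= n)%N.
Proof.
move=> Hg.
have E1 : forall i : 'I_4, exists h : 'I_n -> ps, fgens K i = \sum_(k < n) h k * g k.
  move=> i; have : ps3_ideal g (fgens K i).
    apply/Hg; apply: ideal_P; exists (fun j => if j == i then 1 else 0).
    by rewrite ideal_sum delta_sum.
  by case=> h Eh; exists h; rewrite Eh ideal_sum.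
have E2 : forall k : 'I_n, exists h : 'I_4 -> ps, g k = \sum_(l < 4) h l * fgens K l.
  move=> k; have : ps3_ideal (@fgens K) (g k).
    apply: P_ideal => //; apply/Hg; exists (fun j => if j == k then 1 else 0).
    by rewrite ideal_sum delta_sum.
  by case=> h Eh; exists h; rewrite Eh ideal_sum.
case: (choice E1) => Hh HH; case: (choice E2) => Kk HK.
pose Hm := \matrix_(i < 4, k < n) Hh i k 0%N 0%N 0%N.
pose Km := \matrix_(k < n, l < 4) Kk k l 0%N 0%N 0%N.
have gl : forall k, low 3 (g k).
  by move=> k; rewrite HK; apply: low_sum => l; apply: low_mul; apply: fgens_low.
have Hprod : Hm *m Km = 1%:M.
  apply/matrixP => i e; rewrite !mxE.
  have he : (0 + (3 - e) + e = 3)%N by have := ltn_ord e; lia.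
  have : fgens K i 0%N (3 - e)%N e = (\sum_(k < n) Hm i k * Km k e) * dd e.
    rewrite HH sumE mulr_suml; apply: eq_bigr => k _.
    rewrite (mul_deg _ (gl k) he) HK sumE.
    rewrite (eq_bigr (fun l : 'I_4 => Kk k l 0%N 0%N 0%N * (if (l : nat) == e then dd e else 0))); last first.
      by move=> l _; rewrite (mul_deg _ (@fgens_low K l) he) f_deg3.
    rewrite (bigD1 e) //= eqxx big1 ?addr0; last first.
      by move=> l /negbTE Hl; rewrite (_ : ((l : nat) == e) = false) ?mulr0 //.
    by rewrite !mxE mulrA.
  rewrite f_deg3; case: (i =P e) => [->|Hie]; rewrite ?eqxx.
    by rewrite -{1}[dd e]mul1r => /mulIf -> //; exact: dd_neq0.
  rewrite (_ : ((i : nat) == e) = false); last by apply/negbTE/eqP => E; apply: Hie; apply: val_inj.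
  by move/esym/eqP; rewrite mulf_eq0 (negbTE (@dd_neq0 K e h2 h3)) orbF => /eqP.
have := mxrankM_maxl Hm Km; rewrite Hprod mxrank1 => h.
exact: leq_trans h (rank_leq_col Hm).
Qed.

End S.

Lemma natr_char_neq0 (K : fieldType)
  (hchar : (forall p : nat, p \notin [pchar K]) \/
           (exists p : nat, p \in [pchar K] /\ (5 <= p)%N)) (q : nat) :
  prime q -> (q < 5)%N -> (q%:R : K) != 0.
Proof.
move=> pq q5; apply/negP => /eqP q0.
have hq : q \in [pchar K] by apply/andP; split => //; apply/eqP.
case: hchar => [H|[p [Hp p5]]]; first by move: (H q); rewrite hq.
have := pcharf_eq Hp q; rewrite hq => /esym /eqP E.
by move: p5; rewrite -E; lia.
Qed.

Theorem mainTheorem5 (K : fieldType)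
  (hchar : (forall p : nat, p \notin [pchar K]) \/
           (exists p : nat, p \in [pchar K] /\ (5 <= p)%N)) :
  (forall F : ps3 K, P_Moh F <-> ps3_ideal (@fgens K) F) /\
  (forall (n : nat) (g : 'I_n -> ps3 K),
     (forall F : ps3 K, P_Moh F <-> ps3_ideal g F) -> (4 <= n)%N).
Proof.
have h2 : (2 : K) != 0 by apply: (natr_char_neq0 hchar).
have h3 : (3 : K) != 0 by apply: (natr_char_neq0 hchar).
split.
- move=> F; split; [exact: P_ideal| exact: ideal_P].
- move=> n g Hg; exact: (min_gens h2 h3 Hg).
Qed.
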